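(* For every integer $n\ge3$ with $n\not\equiv 2\pmod 4$ and every positive integer $s$, there exists a $(1,s,n)$-AONT.
   Context: Let $X$ be a finite alphabet with $|X|=v$ and $0\le t\le s$. A $(t,s,v)$-AONT is a bijection $\phi:X^s\to X^s$ such that for every $I\subseteq\{1,\dots,s\}$ with $|I|=t$ and every $J\subseteq\{1,\dots,s\}$ with $|J|=s-t$, the map $x\mapsto\big((x_i)_{i\in I},(\phi(x)_j)_{j\in J}\big)$ is a bijection $X^s\to X^t\times X^{s-t}$. *)

(* Defs.v *)
From mathcomp Require Import all_boot.
Set Implicit Arguments. Unset Strict Implicit. Unset Printing Implicit Defensive.

Definition word (X : finType) (s : nat) := {ffun 'I_s -> X}.

(* For I, J subsets of {1..s} (here {0..s-1}), the map
   x |-> ((x_i)_{i in I}, (phi x)_j_{j in J})  from X^s to X^I x X^J. *)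
Definition aont_proj (X : finType) (s : nat) (phi : word X s -> word X s)
  (I J : {set 'I_s}) (x : word X s)
  : {ffun {i : 'I_s | i \in I} -> X} * {ffun {j : 'I_s | j \in J} -> X} :=
  ([ffun i => x (val i)], [ffun j => phi x (val j)]).

(* (t,s,v)-AONT over alphabet X (with |X| = v): a bijection phi : X^s -> X^s
   such that for all I, J with |I| = t, |J| = s - t the map above is a bijection. *)
Definition is_AONT (X : finType) (t s : nat) (phi : word X s -> word X s) : Prop :=
  bijective phi /\
  forall I J : {set 'I_s}, #|I| = t -> #|J| = s - t ->
    bijective (aont_proj phi I J).

(* Main.v *)
From HB Require Import structures.
Require Import Defs.
From mathcomp Require Import all_boot all_algebra zify.
Import GRing.Theory.

Section Main.
Variables (X : finZmodType) (f : X -> X).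
Hypothesis finj : injective f.
Hypothesis ginj : injective (fun x => (x - f x)%R).
Variable s : nat.

Definition psi (y : word X s) : word X s :=
  [ffun i : 'I_s => (\sum_(k < s) (if (k <= i)%N then y k else f (y k)))%R].

Lemma key (y y' : word X s) (j i : 'I_s) :
  (forall k, k != j -> y k = y' k) ->
  (psi y i - psi y' i = (if (j <= i)%N then y j - y' j else f (y j) - f (y' j)))%R.
Proof.
move=> H; rewrite !ffunE -sumrB (bigD1 j) //= big1 ?addr0.
  by case: ifP.
by move=> k /H ->; rewrite subrr.
Qed.

Lemma step (y : word X s) (j i : 'I_s) : val j = (val i).+1 ->
  (psi y j - psi y i = y j - f (y j))%R.
Proof.
move=> E; rewrite !ffunE -sumrB (bigD1 j) //= big1 ?addr0.
  by rewrite leqnn E ltnn.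
move=> k kj.
have kj' : (val k != (val i).+1) by rewrite -E; apply: contra kj => /eqP /val_inj ->.
by rewrite E leq_eqVlt (negbTE kj') /= ltnS subrr.
Qed.

Lemma psi_inj : injective psi.
Proof.
move=> y y' E.
have Hk : forall k : 'I_s, 0 < k -> y k = y' k.
  move=> k kp.
  have ilt : (val k).-1 < s := leq_ltn_trans (leq_pred _) (ltn_ord k).
  have Ek : val k = (val (Ordinal ilt)).+1 by rewrite /= prednK.
  apply: ginj => /=.
  by rewrite -(step y _ _ Ek) -(step y' _ _ Ek) E.
have H0 : forall k : 'I_s, val k = 0 -> y k = y' k.
  move=> k k0; apply/eqP; rewrite -subr_eq0.
  have HH : forall k', k' != k -> y k' = y' k'.
    move=> k' nk; apply: Hk; rewrite lt0n; apply: contra nk => /eqP k'0.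
    by apply/eqP/val_inj; rewrite /= k0 k'0.
  have := @key y y' k k HH; rewrite leqnn E subrr => <-.
  by [].
apply/ffunP=> k; case: (posnP k) => [/H0|/Hk] //.
Qed.

Lemma aont_exists : 0 < s -> exists phi : word X s -> word X s, is_AONT 1 phi.
Proof.
move=> s0.
have [g psiK gK] := injF_bij psi_inj.
exists g; split; first by exists psi.
move=> I J cI cJ.
have Hc : #|{: {ffun {i : 'I_s | i \in I} -> X} * {ffun {j : 'I_s | j \in J} -> X}}| <= #|{: word X s}|.
  rewrite card_prod !card_ffun !card_sig.
  have -> : #|[pred x in I]| = #|I| by [].
  have -> : #|[pred x in J]| = #|J| by [].
  by rewrite cI cJ card_ord -expnD subnKC.
apply: (@inj_card_bij _ _ (aont_proj g I J)); last exact: Hc.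
move=> x x' /= [] /ffunP E1 /ffunP E2.
have [i0 Ii0] : exists i0, I = [set i0] by apply/cards1P/eqP.
have cJc : #|~: J| = 1 by have := cardsC J; rewrite cJ card_ord; lia.
have [j0 Jj0] : exists j0, ~: J = [set j0] by apply/cards1P/eqP.
have inJ : forall k, k != j0 -> k \in J.
  move=> k; apply: contraR => kJ; rewrite -in_set1 -Jj0 in_setC //.
have Ey : forall k, k != j0 -> g x k = g x' k.
  move=> k /inJ kJ; have := E2 (exist _ k kJ); rewrite !ffunE //.
have Ex : x i0 = x' i0.
  have i0I : i0 \in I by rewrite Ii0 set11.
  by have := E1 (exist _ i0 i0I); rewrite !ffunE.
have Eyj : g x j0 = g x' j0.
  have := @key (g x) (g x') j0 i0 Ey; rewrite !gK Ex subrr => /esym/eqP.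
  by case: ifP => _; rewrite subr_eq0 => /eqP // /finj.
have : g x = g x'.
  apply/ffunP=> k; case: (eqVneq k j0) => [->|]; [exact: Eyj| exact: Ey].
by move/(congr1 psi); rewrite !gK.
Qed.
End Main.

Lemma odd_mod2 m x y : odd m -> x < m -> y < m -> (x + x) %% m = (y + y) %% m -> x = y.
Proof.
wlog xy : x y / y <= x.
  move=> W om xm ym E; case: (leqP y x) => h; first exact: W.
  by apply/esym/W => //; apply: ltnW.
move=> om xm ym /eqP; rewrite eqn_mod_dvd; last by lia.
have -> : x + x - (y + y) = 2 * (x - y) by lia.
rewrite Gauss_dvdr; last by rewrite coprime_sym coprime2n.
case: (posnP (x - y)) => [|h]; first by lia.
move/(dvdn_leq h); lia.
Qed.


HB.instance Definition _ (X Y : finZmodType) := GRing.Zmodule.on (X * Y)%type.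

Definition goodn n := exists (X : finZmodType) (f : X -> X),
  #|X| = n /\ injective f /\ injective (fun x => (x - f x)%R).

Section Good.
Local Open Scope ring_scope.
Lemma good_prod a b : goodn a -> goodn b -> goodn (a * b).
Proof.
move=> [X [f [cX [fi gi]]]] [Y [h [cY [hi ki]]]].
exists (X * Y)%type, (fun p => (f p.1, h p.2)); split; first by rewrite card_prod cX cY.
split.
  by move=> [p1 p2] [q1 q2] /= [/fi -> /hi ->].
by move=> [p1 p2] [q1 q2] /= [/gi -> /ki ->].
Qed.

Lemma good_sq (G : finZmodType) : goodn (#|G| * #|G|).
Proof.
exists (G * G)%type, (fun p => (p.2, p.1 + p.2)).
split; first by rewrite card_prod.
split.
  move=> [a b] [c d] /= [-> E]; congr (_, _); by move/addIr: E.
move=> [a b] [c d] /= [E1 E2].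
have E3 : a = c.
  by move: E2; rewrite !opprD [b + _]addrCA [d + _]addrCA !subrr !addr0 => /oppr_inj.
by move: E1; rewrite E3 => /addrI /oppr_inj ->.
Qed.

Lemma good_cube (G : finZmodType) : goodn (#|G| * (#|G| * #|G|)).
Proof.
exists (G * (G * G))%type, (fun p => (- p.2.2, (p.1 + p.2.2, p.2.1))); split; first by rewrite !card_prod.
split.
  move=> [a [b c]] [a' [b' c']] /= [/oppr_inj Ec Ea ->].
  by rewrite Ec in Ea *; move/addIr: Ea => ->.
move=> [a [b c]] [a' [b' c']] /= [E1 E2 E3].
(* p = a + c, q = b - a - c, r = c - b ; b = p + q *)
rewrite !opprK in E1.
have Eb : b = b'.
  by have := congr2 +%R E2 E1; rewrite !subrK.
rewrite -Eb in E3 *; move/addIr: E3 => Ec; rewrite -Ec in E1 *.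
by move/addIr: E1 => ->.
Qed.

End Good.

Lemma good_odd k : odd k -> goodn k.+2.
Proof.
move=> ok.
exists ('Z_k.+2 : finZmodType), (fun x => - x)%R; split; first by rewrite card_ord.
split; first exact: oppr_inj.
move=> x y /= E; apply/val_inj.
have E' := congr1 val E; rewrite !opprK in E'.
apply: (@odd_mod2 k.+2); [by rewrite /= negbK | exact: ltn_ord | exact: ltn_ord | exact: E'].
Qed.

Lemma good_all n : 3 <= n -> n %% 4 <> 2 -> goodn n.
Proof.
elim/ltn_ind: n => n IH n3 n4.
case on: (odd n).
  have -> : n = (n - 2).+2 by lia.
  apply: good_odd; lia.
have n4k : n = 4 * (n %/ 4) by lia.
have good4 : goodn 4 by have := good_sq ('Z_2 : finZmodType); rewrite card_ord.
have good8 : goodn 8 by have := good_cube ('Z_2 : finZmodType); rewrite card_ord.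
case: (ltnP (n %/ 4) 3) => hk.
  have [->|->] : n = 4 \/ n = 8 by lia.
    exact: good4.
  exact: good8.
case: (eqVneq (n %/ 4 %% 4) 2) => h2.
  have -> : n = 8 * (n %/ 8) by lia.
  apply: good_prod => //; apply: IH; lia.
rewrite n4k; apply: good_prod => //; apply: IH; lia.
Qed.

Theorem corollary3p4 :
  forall n s : nat, 3 <= n -> n %% 4 <> 2 -> 0 < s ->
  exists (X : finType) (phi : word X s -> word X s),
    #|X| = n /\ is_AONT 1 phi.
Proof.
move=> n s n3 n4 s0.
have [X [f [cX [fi gi]]]] := @good_all n n3 n4.
have [phi Hphi] := @aont_exists X f fi gi s s0.
by exists X, phi.
Qed.
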